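(* Let $X$ be a Lorentzian pre-length space which has timelike curvature bounded above by $0$ globally, is uniquely geodesic and is strongly future timelike geodesically complete. Let $x\in X$, $r>0$ and $z\in I^+(x)$ with $\ell(x,z)=r$. Then $H_{x,r}(I^+(z))\subseteq I(x,z)$, where $H_{x,r}$ is the hyperbolic inversion through $x$ with radius $r$.
   Context: A Lorentzian pre-length space $(X,d,\ll,\le,\ell)$: $(X,d)$ a metric space, $\le$ reflexive and transitive, $\ll$ transitive and contained in $\le$, $\ell:X\times X\to[0,\infty]$ with $\ell(x,z)\ge\ell(x,y)+\ell(y,z)$ whenever $x\le y\le z$, and $\ell(x,y)>0$ iff $x\ll y$. $I^+(x)=\{y:x\ll y\}$, $I(x,z)=I^+(x)\cap\{y:y\ll z\}$. A maximising geodesic from $x\le y$ is a curve $\gamma:[a,b]\to X$ from $x$ to $y$ with $\gamma(s)\le\gamma(t)$ for $s\le t$ and $\ell(\gamma(s),\gamma(u))=\ell(\gamma(s),\gamma(t))+\ell(\gamma(t),\gamma(u))$ for $s\le t\le u$; uniquely geodesic means such a geodesic between any $x\ll y$ is unique. Strongly future timelike geodesically complete: every future-inextendible timelike geodesic is maximising and has infinite $\ell$-length. Hyperbolic inversion: for $p\in I^+(x)$ let $\gamma_p$ be the unique inextendible maximising geodesic from $x$ through $p$; $H_{x,r}(p)$ is the unique point $q$ on $\gamma_p$ with $\ell(x,p)\,\ell(x,q)=r^2$. Timelike curvature bounded above by $0$ globally: (i) $\ell$ is finite and continuous on $X\times X$; (ii) any $x\ll y$ are joined by a maximising geodesic; (iii)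 for every timelike triangle $\Delta(x,y,z)$ ($x\ll y\ll z$ with maximising geodesics as sides) and any points $p,q$ on its sides, $\ell(p,q)\ge\ell(\bar p,\bar q)$, where $\bar p,\bar q$ are the corresponding points (same $\ell$-distances from the endpoints of their side) on a triangle in the Minkowski plane $\mathbb R^{1,1}$ with the same side lengths. *)

(* Defs.v *)
From Stdlib Require Import Reals List.
From Coquelicot Require Import Rbar.
Open Scope R_scope.

Section LPLS.
Variables (X : Type) (d : X -> X -> R) (ll le : X -> X -> Prop)
          (ell : X -> X -> Rbar).

Record is_LPLS : Prop := {
  d_nonneg : forall x y, 0 <= d x y;
  d_eq0 : forall x y, d x y = 0 <-> x = y;
  d_sym : forall x y, d x y = d y x;
  d_tri : forall x y z, d x z <= d x y + d y z;
  le_refl : forall x, le x x;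
  le_trans : forall x y z, le x y -> le y z -> le x z;
  ll_trans : forall x y z, ll x y -> ll y z -> ll x z;
  ll_le : forall x y, ll x y -> le x y;
  ell_nonneg : forall x y, Rbar_le (Finite 0) (ell x y);
  ell_rev_tri : forall x y z, le x y -> le y z ->
      Rbar_le (Rbar_plus (ell x y) (ell y z)) (ell x z);
  ell_pos : forall x y, Rbar_lt (Finite 0) (ell x y) <-> ll x y
}.

Definition chrono_diamond (x z y : X) : Prop := ll x y /\ ll y z.

Definition cont_on_closed (g : R -> X) (a b : R) : Prop :=
  forall t, a <= t <= b -> forall eps, 0 < eps -> exists delta, 0 < delta /\
    forall s, a <= s <= b -> Rabs (s - t) < delta -> d (g s) (g t) < eps.

Definition cont_on_halfopen (g : R -> X) (a b : R) : Prop :=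
  forall t, a <= t < b -> forall eps, 0 < eps -> exists delta, 0 < delta /\
    forall s, a <= s < b -> Rabs (s - t) < delta -> d (g s) (g t) < eps.

Definition max_geodesic (g : R -> X) (a b : R) (x y : X) : Prop :=
  a < b /\ cont_on_closed g a b /\ g a = x /\ g b = y /\
  (forall s t, a <= s -> s <= t -> t <= b -> le (g s) (g t)) /\
  (forall s t u, a <= s -> s <= t -> t <= u -> u <= b ->
     ell (g s) (g u) = Rbar_plus (ell (g s) (g t)) (ell (g t) (g u))).

(** uniquely geodesic: maximising geodesics between x << y are unique
    (up to reparametrisation, i.e. they have the same image). *)
Definition uniquely_geodesic : Prop :=
  forall x y, ll x y ->
  forall g1 a1 b1 g2 a2 b2, max_geodesic g1 a1 b1 x y -> max_geodesic g2 a2 b2 x y ->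
  forall s, a1 <= s <= b1 -> exists t, a2 <= t <= b2 /\ g1 s = g2 t.

Definition timelike_on (g : R -> X) (a b : R) : Prop :=
  forall s t, a <= s -> s < t -> t < b -> ll (g s) (g t).

Definition causal_on (g : R -> X) (a b : R) : Prop :=
  forall s t, a <= s -> s <= t -> t < b -> le (g s) (g t).

Definition additive_on (g : R -> X) (lo hi : R -> Prop) : Prop :=
  forall s t u, lo s -> hi u -> s <= t -> t <= u ->
     ell (g s) (g u) = Rbar_plus (ell (g s) (g t)) (ell (g t) (g u)).

Definition maximising_on (g : R -> X) (a b : R) : Prop :=
  additive_on g (fun s => a <= s) (fun u => u < b).

Definition loc_maximising_on (g : R -> X) (a b : R) : Prop :=
  forall t, a <= t < b -> exists delta, 0 < delta /\
    additive_on g (fun s => a <= s /\ t - delta < s) (fun u => u < b /\ u < t + delta).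

Definition timelike_geodesic (g : R -> X) (a b : R) : Prop :=
  a < b /\ cont_on_halfopen g a b /\ timelike_on g a b /\ loc_maximising_on g a b.

Definition future_inextendible (g : R -> X) (a b : R) : Prop :=
  ~ (exists p, forall eps, 0 < eps -> exists t0, a <= t0 < b /\
        forall t, t0 < t < b -> d (g t) p < eps).

Fixpoint partition_sum (g : R -> X) (x0 : R) (l : list R) : Rbar :=
  match l with
  | nil => Finite 0
  | y :: l' => Rbar_plus (ell (g x0) (g y)) (partition_sum g y l')
  end.

Fixpoint strictly_increasing_from (x0 : R) (l : list R) : Prop :=
  match l with
  | nil => True
  | y :: l' => x0 < y /\ strictly_increasing_from y l'
  end.

(** l describes a partition s = t_0 < t_1 < ... < t_n = t of [s,t] *)
Definition partition_of (s t : R) (l : list R) : Prop :=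
  l <> nil /\ strictly_increasing_from s l /\ last l s = t.

(** the ell-length L(g) = sup_{t<b} inf_{partitions of [a,t]} sum ell is +oo *)
Definition infinite_ell_length (g : R -> X) (a b : R) : Prop :=
  forall M : R, exists t, a < t < b /\
    forall l, partition_of a t l -> Rbar_le (Finite M) (partition_sum g a l).

Definition strongly_ftl_geod_complete : Prop :=
  forall g a b, timelike_geodesic g a b -> future_inextendible g a b ->
    maximising_on g a b /\ infinite_ell_length g a b.

(** Minkowski plane R^{1,1}: points (t, x), time separation *)
Definition mtau (P Q : R * R) : R :=
  let dt := fst Q - fst P in let dx := snd Q - snd P in
  if Rle_dec (Rabs dx) dt then sqrt (dt * dt - dx * dx) else 0.

Definition on_segment (U V P : R * R) : Prop :=
  exists lam, 0 <= lam <= 1 /\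
    P = (fst U + lam * (fst V - fst U), snd U + lam * (snd V - snd U)).

Definition side_point (u v : X) (g : R -> X) (a b : R) (ub vb : R * R)
    (p : X) (pb : R * R) : Prop :=
  (exists s, a <= s <= b /\ g s = p) /\ on_segment ub vb pb /\
  Finite (mtau ub pb) = ell u p /\ Finite (mtau pb vb) = ell p v.

Definition tl_curv_bounded_above_0 : Prop :=
  (forall x y, is_finite (ell x y)) /\
  (forall x y eps, 0 < eps -> exists delta, 0 < delta /\
     forall x' y', d x x' < delta -> d y y' < delta ->
       Rabs (real (ell x' y') - real (ell x y)) < eps) /\
  (forall x y, ll x y -> exists g a b, max_geodesic g a b x y) /\
  (forall x y z g1 a1 b1 g2 a2 b2 g3 a3 b3, ll x y -> ll y z ->
     max_geodesic g1 a1 b1 x y -> max_geodesic g2 a2 b2 y z ->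
     max_geodesic g3 a3 b3 x z ->
     forall xb yb zb : R * R,
       Finite (mtau xb yb) = ell x y -> Finite (mtau yb zb) = ell y z ->
       Finite (mtau xb zb) = ell x z ->
     forall p pb q qb,
       (side_point x y g1 a1 b1 xb yb p pb \/ side_point y z g2 a2 b2 yb zb p pb \/
        side_point x z g3 a3 b3 xb zb p pb) ->
       (side_point x y g1 a1 b1 xb yb q qb \/ side_point y z g2 a2 b2 yb zb q qb \/
        side_point x z g3 a3 b3 xb zb q qb) ->
       Rbar_le (Finite (mtau pb qb)) (ell p q)).

(** q = H_{x,r}(p): q is the point on the (unique) future-inextendible
    maximising geodesic g from x through p with ell(x,p) ell(x,q) = r^2 *)
Definition hyperbolic_inversion (x : X) (r : R) (p q : X) : Prop :=
  ll x p /\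
  exists g a b,
    a < b /\ g a = x /\ cont_on_halfopen g a b /\ causal_on g a b /\
    maximising_on g a b /\ future_inextendible g a b /\
    (exists s, a <= s < b /\ g s = p) /\
    (exists s, a <= s < b /\ g s = q) /\
    Rbar_mult (ell x p) (ell x q) = Finite (r ^ 2).

End LPLS.

(* Main.v *)
Require Import Defs.
From Stdlib Require Import Reals Lra Psatz.
From Coquelicot Require Import Rbar.
Open Scope R_scope.

Lemma mtau_val (P Q : R * R) :
  Rabs (snd Q - snd P) <= fst Q - fst P ->
  mtau P Q = sqrt ((fst Q - fst P) * (fst Q - fst P) - (snd Q - snd P) * (snd Q - snd P)).
Proof. intro H. unfold mtau. destruct Rle_dec; [reflexivity | contradiction]. Qed.

Lemma sqrt_sq' (u : R) : 0 <= u -> sqrt (u * u) = u.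
Proof. intro H. apply sqrt_square. exact H. Qed.

Theorem proposition3p8 (X : Type) (d : X -> X -> R) (ll le : X -> X -> Prop)
    (ell : X -> X -> Rbar) :
  is_LPLS X d ll le ell ->
  tl_curv_bounded_above_0 X d ll le ell ->
  uniquely_geodesic X d ll le ell ->
  strongly_ftl_geod_complete X d ll ell ->
  forall (x : X) (r : R) (z : X),
    0 < r -> ll x z -> ell x z = Finite r ->
  forall p, ll z p ->
  forall q, hyperbolic_inversion X d ll le ell x r p q ->
    chrono_diamond X ll x z q.
Proof.
  intros HL HC _ _ x r z Hr Hxz Hxzr p Hzp q Hinv.
  destruct HC as [Hfin [_ [Hgeo Hcmp]]].
  destruct Hinv as [Hxp [g [a [b [Hab [Hga [Hcont [Hcaus [Hmax [_ [[s [Hs Hgs]] [[s' [Hs' Hgs']] Hmul]]]]]]]]]]]].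
  assert (fin : forall u v, ell u v = Finite (real (ell u v))) by (intros; symmetry; apply Hfin).
  assert (Hzero : forall w, real (ell w w) = 0).
  { intro w. pose proof (@ell_rev_tri _ _ _ _ _ HL w w w (@le_refl _ _ _ _ _ HL w) (@le_refl _ _ _ _ _ HL w)) as H.
    pose proof (@ell_nonneg _ _ _ _ _ HL w w) as H0.
    rewrite (fin w w) in H, H0. simpl in H, H0. lra. }
  set (L := real (ell x p)). set (c := real (ell z p)). set (e := real (ell x q)).
  assert (HLrc : r + c <= L).
  { pose proof (@ell_rev_tri _ _ _ _ _ HL x z p (@ll_le _ _ _ _ _ HL _ _ Hxz) (@ll_le _ _ _ _ _ HL _ _ Hzp)) as H.
    rewrite Hxzr, (fin z p), (fin x p) in H. simpl in H. unfold L, c. lra. }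
  assert (Hc : 0 < c).
  { pose proof (proj2 (@ell_pos _ _ _ _ _ HL z p) Hzp) as H. rewrite (fin z p) in H. simpl in H. exact H. }
  assert (HLe : L * e = r * r).
  { rewrite (fin x p), (fin x q) in Hmul. simpl in Hmul. injection Hmul. unfold L, e. intro H; rewrite H. ring. }
  assert (HLpos : 0 < L) by lra.
  assert (He : e = r * r / L) by (field_simplify_eq; [lra | lra]).
  assert (Hsa : a < s).
  { destruct (Rle_lt_dec s a) as [H|H]; [|exact H].
    assert (s = a) by lra. subst s. rewrite Hga in Hgs. subst p.
    pose proof (proj2 (@ell_pos _ _ _ _ _ HL x x) Hxp) as H1. rewrite (fin x x), Hzero in H1. simpl in H1. lra. }
  assert (Hss : s' <= s).
  { destruct (Rle_lt_dec s' s) as [H|H]; [exact H|].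
    pose proof (Hmax a s s' (Rle_refl a) (proj2 Hs') (proj1 Hs) (Rlt_le _ _ H)) as H1.
    rewrite Hga, Hgs, Hgs', (fin x q), (fin x p), (fin p q) in H1. simpl in H1. injection H1. intro H2.
    pose proof (@ell_nonneg _ _ _ _ _ HL p q) as H3. rewrite (fin p q) in H3. simpl in H3.
    fold e L in H2. exfalso. nra. }
  assert (Hadd : L = e + real (ell q p)).
  { pose proof (Hmax a s' s (Rle_refl a) (proj2 Hs) (proj1 Hs') Hss) as H1.
    rewrite Hga, Hgs, Hgs', (fin x q), (fin x p), (fin q p) in H1. simpl in H1. injection H1. unfold L, e. lra. }
  assert (Hepos : 0 < e).
  { rewrite He. apply Rdiv_lt_0_compat; nra. }
  split.
  { apply (@ell_pos _ _ _ _ _ HL). rewrite (fin x q). simpl. exact Hepos. }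
  destruct (Hgeo x z Hxz) as [g1 [a1 [b1 Hg1]]].
  destruct (Hgeo z p Hzp) as [g2 [a2 [b2 Hg2]]].
  assert (Hg3 : max_geodesic X d le ell g a s x p).
  { split; [exact Hsa|]. split.
    { intros t Ht eps Heps. destruct (Hcont t ltac:(lra) eps Heps) as [del [Hdel Hd]].
      exists del. split; [exact Hdel|]. intros u Hu Hu2. apply Hd; [lra | exact Hu2]. }
    split; [exact Hga|]. split; [exact Hgs|]. split.
    { intros u v H1 H2 H3. apply Hcaus; lra. }
    { intros u v w H1 H2 H3 H4. apply Hmax; lra. } }
  set (t := (L * L + r * r - c * c) / (2 * L)).
  assert (Ht : 2 * L * t = L * L + r * r - c * c) by (unfold t; field; lra).
  assert (Htr : r <= t) by nra.
  assert (HLtc : c <= L - t) by nra.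
  set (y := sqrt (t * t - r * r)).
  assert (Hy2 : y * y = t * t - r * r) by (unfold y; apply sqrt_sqrt; nra).
  assert (Hy0 : 0 <= y) by (unfold y; apply sqrt_pos).
  assert (Hyt : y <= t) by nra.
  assert (HyLt : y <= L - t) by nra.
  set (m := r * r / L).
  assert (HmL : m * L = r * r) by (unfold m; field; lra).
  assert (Hcmp' := Hcmp x z p g1 a1 b1 g2 a2 b2 g a s Hxz Hzp Hg1 Hg2 Hg3
            (0, 0) (t, y) (L, 0)).
  assert (E1 : Finite (mtau (0, 0) (t, y)) = ell x z).
  { rewrite Hxzr, mtau_val; simpl; fold L c e.
    - f_equal. replace ((t - 0) * (t - 0) - (y - 0) * (y - 0)) with (r * r) by nra.
      apply sqrt_sq'; lra.
    - rewrite Rabs_right; lra. }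
  assert (E2 : Finite (mtau (t, y) (L, 0)) = ell z p).
  { rewrite (fin z p), mtau_val; simpl; fold L c e.
    - f_equal. replace ((L - t) * (L - t) - (0 - y) * (0 - y)) with (c * c) by nra.
      apply sqrt_sq'; lra.
    - rewrite Rabs_left1; lra. }
  assert (E3 : Finite (mtau (0, 0) (L, 0)) = ell x p).
  { rewrite (fin x p), mtau_val; simpl; fold L c e.
    - f_equal. replace ((L - 0) * (L - 0) - (0 - 0) * (0 - 0)) with (L * L) by ring.
      apply sqrt_sq'; lra.
    - rewrite Rminus_0_r, Rabs_R0; lra. }
  assert (Hm0 : 0 < m) by (unfold m; apply Rdiv_lt_0_compat; nra).
  assert (HmLe : m < L) by (assert (r * r < L * L) by nra; apply (Rmult_lt_reg_r L); nra).
  assert (Sq : side_point X ell x p g a s (0, 0) (L, 0) q (m, 0)).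
  { split; [exists s'; split; [lra | exact Hgs']|]. split.
    { exists (m / L). split.
      - split; [apply Rlt_le, Rdiv_lt_0_compat; lra|].
        apply (Rmult_le_reg_r L); [lra|]. unfold Rdiv. rewrite Rmult_assoc, Rinv_l; lra.
      - simpl. f_equal; field; lra. }
    split.
    - rewrite (fin x q), mtau_val; simpl; fold L c e.
      + f_equal. replace ((m - 0) * (m - 0) - (0 - 0) * (0 - 0)) with (m * m) by ring.
        rewrite sqrt_sq'; [|lra]. fold e. rewrite He. reflexivity.
      + rewrite Rminus_0_r, Rabs_R0; lra.
    - rewrite (fin q p), mtau_val; simpl; fold L c e.
      + f_equal. replace ((L - m) * (L - m) - (0 - 0) * (0 - 0)) with ((L - m) * (L - m)) by ring.
        rewrite sqrt_sq'; [|lra]. fold m in He. lra.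
      + rewrite Rminus_0_r, Rabs_R0; lra. }
  assert (Sz : side_point X ell z p g2 a2 b2 (t, y) (L, 0) z (t, y)).
  { destruct Hg2 as [Ha2 [_ [Hg2a _]]].
    split; [exists a2; split; [lra | exact Hg2a]|]. split.
    { exists 0. split; [lra|]. simpl. f_equal; ring. }
    split; [|exact E2].
    rewrite (fin z z), Hzero, mtau_val; simpl; fold L c e.
    - f_equal. replace ((t - t) * (t - t) - (y - y) * (y - y)) with 0 by ring. apply sqrt_0.
    - replace (y - y) with 0 by ring. replace (t - t) with 0 by ring. rewrite Rabs_R0; lra. }
  pose proof (Hcmp' E1 E2 E3 q (m, 0) z (t, y) (or_intror (or_intror Sq)) (or_intror (or_introl Sz))) as Hq.
  apply (@ell_pos _ _ _ _ _ HL). rewrite (fin q z) in *. simpl in Hq |- *.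
  eapply Rlt_le_trans; [|exact Hq].
  rewrite mtau_val; simpl; fold L c e.
  - apply sqrt_lt_R0.
    assert (Htm : 2 * L * (t - m) = L * L - r * r - c * c) by (rewrite Rmult_minus_distr_l, Ht; nra).
    assert (Htm0 : 0 < t - m) by nra.
    replace ((t - m) * (t - m) - (y - 0) * (y - 0)) with (m * m - 2 * t * m + r * r) by nra.
    assert (HH : L * L * (m * m - 2 * t * m + r * r) = r * r * c * c) by nra.
    assert (Hrc : 0 < r * r * c * c) by (repeat apply Rmult_lt_0_compat; lra).
    apply (Rmult_lt_reg_l (L * L)); [nra|]. rewrite Rmult_0_r, HH. exact Hrc.
  - rewrite Rminus_0_r, Rabs_right by lra.
    assert (Htm : 2 * L * (t - m) = L * L - r * r - c * c) by (rewrite Rmult_minus_distr_l, Ht; nra).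
    assert (Htm0 : 0 < t - m) by nra.
    assert (HH : L * L * ((t - m) * (t - m) - y * y) = r * r * c * c) by nra.
    assert (Hrc : 0 < r * r * c * c) by (repeat apply Rmult_lt_0_compat; lra).
    assert (HP : 0 < (t - m) * (t - m) - y * y).
    { apply (Rmult_lt_reg_l (L * L)); [nra|]. rewrite Rmult_0_r, HH. exact Hrc. }
    nra.
Qed.
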